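(* Let $U$ be a nonempty open subset of $\mathbb{R}^d$ and $(x_n)_{n\ge1}$ a sequence in $\mathbb{R}^d$. Assume there is a nonempty dyadic cube $\lambda\subseteq U$ such that $\liminf_{j\to\infty}2^{-dj}\#\mathrm{M}((x_n)_{n\ge1};\lambda,j)=0$. Then $(x_n)_{n\ge1}$ is not uniformly eutaxic in $U$.
   Context: Fix a norm $|\cdot|$ on $\mathbb{R}^d$; $\mathcal{L}^d$ is Lebesgue measure. $\mathrm{P}_d$ is the set of real sequences $(r_n)_{n\ge1}$ with $r_{n+1}\le r_n$ for all $n$, $r_n\to0$ and $\sum_n r_n^d=\infty$. A sequence $(x_n)$ in $\mathbb{R}^d$ is uniformly eutaxic in $U$ if for every $(r_n)\in\mathrm{P}_d$, $\mathcal{L}^d$-almost every $x\in U$ satisfies $|x-x_n|<r_n$ for infinitely many $n$. A dyadic cube is a set $\lambda=2^{-j}(k+[0,1)^d)$ with $j\in\mathbb{Z}$, $k\in\mathbb{Z}^d$; its generation is $\langle\lambda\rangle=j$. For a nonempty dyadic cube $\lambda$ and an integer $j\ge0$, $\mathrm{M}((x_n)_{n\ge1};\lambda,j)$ is the set of dyadic cubes $\lambda'\subseteq\lambda$ of generation $\langle\lambda\rangle+j$ such that $x_n\in\lambda'$ for some $n\le2^{d\langle\lambda'\rangle}$. *)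

(* Defs.v *)
From Stdlib Require Vectors.Fin.
From Stdlib Require Import Reals Lra Lia ZArith List.
Import ListNotations.
Open Scope R_scope.

Definition pt (d : nat) : Type := Fin.t d -> R.

Definition psub {d} (x y : pt d) : pt d := fun i => x i - y i.
Definition padd {d} (x y : pt d) : pt d := fun i => x i + y i.
Definition pscal {d} (c : R) (x : pt d) : pt d := fun i => c * x i.

Definition is_norm (d : nat) (N : pt d -> R) : Prop :=
  (forall x, 0 <= N x) /\
  (forall x, N x = 0 -> forall i, x i = 0) /\
  (forall c x, N (pscal c x) = Rabs c * N x) /\
  (forall x y, N (padd x y) <= N x + N y).

Fixpoint fprod (d : nat) : (Fin.t d -> R) -> R :=
  match d with
  | O => fun _ => 1
  | S d' => fun f => f Fin.F1 * fprod d' (fun i => f (Fin.FS i))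
  end.

Definition lebesgue_null (d : nat) (A : pt d -> Prop) : Prop :=
  forall eps, 0 < eps ->
    exists a b : nat -> pt d,
      (forall k i, a k i <= b k i) /\
      (forall x, A x -> exists k, forall i, a k i <= x i <= b k i) /\
      (forall n, sum_f_R0 (fun k => fprod d (fun i => b k i - a k i)) n <= eps).

Definition is_open (d : nat) (U : pt d -> Prop) : Prop :=
  forall x, U x -> exists delta, 0 < delta /\
    forall y, (forall i, Rabs (y i - x i) < delta) -> U y.

(* The class P_d (sequences indexed by n >= 1; the value at 0 is irrelevant). *)
Definition in_Pd (d : nat) (r : nat -> R) : Prop :=
  (forall n, (1 <= n)%nat -> r (S n) <= r n) /\
  (forall eps, 0 < eps -> exists N, forall n, (N <= n)%nat -> Rabs (r n) < eps) /\
  (forall M, exists K, M < sum_f_R0 (fun i => r (S i) ^ d) K).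

Definition uniformly_eutaxic (d : nat) (N : pt d -> R) (x : nat -> pt d)
  (U : pt d -> Prop) : Prop :=
  forall r, in_Pd d r ->
    lebesgue_null d (fun y => U y /\
      ~ (forall m, exists n, (m <= n)%nat /\ (1 <= n)%nat /\ N (psub y (x n)) < r n)).

Definition in_cube {d} (j : Z) (k : Fin.t d -> Z) (y : pt d) : Prop :=
  forall i, powerRZ 2 (- j) * IZR (k i) <= y i < powerRZ 2 (- j) * (IZR (k i) + 1).

(* k' indexes an element of M((x_n); lambda, j) where lambda = cube (j0, k). *)
Definition in_M {d} (x : nat -> pt d) (j0 : Z) (k : Fin.t d -> Z) (j : nat)
  (k' : Fin.t d -> Z) : Prop :=
  (forall y, in_cube (j0 + Z.of_nat j) k' y -> in_cube j0 k y) /\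
  exists n, (1 <= n)%nat /\
    INR n <= powerRZ 2 (Z.of_nat d * (j0 + Z.of_nat j)) /\
    in_cube (j0 + Z.of_nat j) k' (x n).

Definition is_card {A : Type} (P : A -> Prop) (c : nat) : Prop :=
  exists l : list A, NoDup l /\ length l = c /\ forall a, P a <-> In a l.

(* Main.v *)
Require Import Defs.
From Stdlib Require Import Reals Lra Lia ZArith List.
From Stdlib Require Import FunctionalExtensionality ClassicalEpsilon Classical.
Import ListNotations.
Open Scope R_scope.


Definition pcons {d} (t : R) (y : pt d) : pt (S d) :=
  fun i => Fin.caseS' i (fun _ => R) t y.

Lemma pt_eta {d} (z : pt (S d)) : z = pcons (z Fin.F1) (fun j => z (Fin.FS j)).
Proof. apply functional_extensionality; intro i. pattern i; apply Fin.caseS'; reflexivity. Qed.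

Lemma pt0_eq (y z : pt 0) : y = z.
Proof. apply functional_extensionality; intro i; apply (Fin.case0 (fun i => y i = z i)). Qed.

Definition inbox {d} (a b y : pt d) : Prop := forall i, a i <= y i <= b i.
Definition sopen {d} (O : pt d -> Prop) : Prop :=
  forall y, O y -> exists e, 0 < e /\ forall z, (forall i, Rabs (z i - y i) < e) -> O z.

Lemma fin_min : forall d (P : Fin.t d -> R -> Prop),
  (forall i, exists e, 0 < e /\ P i e) ->
  (forall i e e', 0 < e' <= e -> P i e -> P i e') ->
  exists e, 0 < e /\ forall i, P i e.
Proof.
  induction d; intros P H1 H2.
  - exists 1; split; [lra|]. intro i; apply (Fin.case0 (fun i => P i 1)).
  - destruct (IHd (fun j e => P (Fin.FS j) e)) as [e1 [He1 Hp1]].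
    + intro i; apply H1.
    + intros; eapply H2; eauto.
    + destruct (H1 Fin.F1) as [e0 [He0 Hp0]].
      exists (Rmin e0 e1); split. { apply Rmin_glb_lt; auto. }
      intro i; pattern i; apply Fin.caseS'.
      * eapply H2; [|exact Hp0]. split; [apply Rmin_glb_lt; auto| apply Rmin_l].
      * intro j; eapply H2; [|exact (Hp1 j)]. split; [apply Rmin_glb_lt; auto| apply Rmin_r].
Qed.

Definition lmin (l : list R) : R := fold_right Rmin 1 l.
Lemma lmin_pos l : (forall x, In x l -> 0 < x) -> 0 < lmin l.
Proof.
  induction l; simpl; intros H; [lra|]. apply Rmin_glb_lt; auto.
Qed.
Lemma lmin_le l x : In x l -> lmin l <= x.
Proof.
  induction l; simpl; intros H; [contradiction|]. destruct H as [<-|H].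
  - apply Rmin_l.
  - eapply Rle_trans; [apply Rmin_r|]; auto.
Qed.

Lemma compact1 (a b : R) (dl : R -> R) : (forall t, 0 < dl t) ->
  exists l : list R, forall y, a <= y <= b ->
    exists t, In t l /\ a <= t <= b /\ Rabs (y - t) < dl t.
Proof.
  intro Hd.
  set (fam := mkfamily (fun t => a <= t <= b) (fun t y => a <= t <= b /\ Rabs (y - t) < dl t)
     (fun t H => match H with ex_intro _ _ H' => proj1 H' end)).
  destruct (compact_P3 a b fam) as [D [Hcov [l Hl]]].
  - split.
    + intros y Hy. exists y. simpl. split; auto. rewrite Rminus_diag, Rabs_R0; auto.
    + intros t y Hy. simpl in Hy. destruct Hy as [Ht Hy].
      exists (mkposreal _ (Rlt_Rminus _ _ Hy)). intros z Hz. unfold disc in Hz; simpl in *.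
      split; auto. replace (z - t) with ((z - y) + (y - t)) by ring.
      eapply Rle_lt_trans; [apply Rabs_triang|]. lra.
  - exists l. intros y Hy. destruct (Hcov y Hy) as [t [[Ht1 Ht2] Ht3]].
    exists t. split; [|auto]. apply Hl. simpl. split; auto.
Qed.

Lemma sbox_open {d} (y0 : pt d) (de : R) : sopen (fun y => forall j, Rabs (y j - y0 j) < de).
Proof.
  intros y Hy.
  destruct (fin_min d (fun j e => forall z, Rabs (z - y j) < e -> Rabs (z - y0 j) < de)) as [e [He Hp]].
  - intro j. exists (de - Rabs (y j - y0 j)). split. { specialize (Hy j); lra. }
    intros z Hz. replace (z - y0 j) with ((z - y j) + (y j - y0 j)) by ring.
    eapply Rle_lt_trans; [apply Rabs_triang|]. lra.
  - intros j e1 e2 [He2 Hle] H z Hz. apply H. lra.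
  - exists e. split; [exact He|]. intros z Hz j. exact (Hp j _ (Hz j)).
Qed.

Lemma box_compact : forall d (a b : pt d) (I : Type) (O : I -> pt d -> Prop),
  (forall i, sopen (O i)) -> (forall y, inbox a b y -> exists i, O i y) ->
  exists L : list I, forall y, inbox a b y -> exists i, In i L /\ O i y.
Proof.
  induction d; intros a b I O Hop Hcov.
  - destruct (Hcov (fun i => Fin.case0 _ i)) as [i Hi].
    + intro i; exact (Fin.case0 (fun i => a i <= Fin.case0 (fun _ => R) i <= b i) i).
    + exists [i]. intros y _. exists i. split; [left; auto|]. rewrite (pt0_eq y (fun i => Fin.case0 _ i)); auto.
  - set (a' := fun j => a (Fin.FS j)). set (b' := fun j => b (Fin.FS j)).
    assert (Htube : forall t, exists p : R * list I, 0 < fst p /\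
      (a Fin.F1 <= t <= b Fin.F1 -> forall u y', Rabs (u - t) < fst p -> inbox a' b' y' ->
         exists i, In i (snd p) /\ O i (pcons u y'))).
    { intro t. destruct (classic (a Fin.F1 <= t <= b Fin.F1)) as [Ht|Ht].
      2:{ exists (1, @nil I); simpl; split; [lra|]. intros; contradiction. }
      set (O' := fun (q : I * R * pt d) (y' : pt d) =>
        let '(i, de, y0) := q in 0 < de /\
          (forall u z', Rabs (u - t) < 2 * de -> (forall j, Rabs (z' j - y0 j) < 2 * de) -> O i (pcons u z')) /\
          (forall j, Rabs (y' j - y0 j) < de)).
      destruct (IHd a' b' _ O') as [L' HL'].
      - intros [[i de] y0] y' Hy'. destruct Hy' as [Hde [Hq Hy']].
        destruct (sbox_open y0 de y' Hy') as [e [He He']]. exists e; split; auto.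
        intros z Hz. simpl. split; [auto|split; auto].
      - intros y' Hy'. destruct (Hcov (pcons t y')) as [i Hi].
        + intro i; pattern i; apply Fin.caseS'; simpl; [exact Ht|]. intro j; apply Hy'.
        + destruct (Hop i _ Hi) as [rho [Hrho Hr]].
          exists (i, rho / 2, y'). simpl. split; [lra|]. split.
          * intros u z' Hu Hz. apply Hr. intro i0; pattern i0; apply Fin.caseS'; simpl.
            -- lra.
            -- intro j. specialize (Hz j). lra.
          * intro j. rewrite Rminus_diag, Rabs_R0. lra.
      - exists (lmin (map (fun q => let de := snd (fst q) in if Rlt_dec 0 de then de else 1) L'),
               map (fun q => fst (fst q)) L'). simpl. split.
        + apply lmin_pos. intros z Hz. apply in_map_iff in Hz. destruct Hz as [[[i de] y0] [<- Hq]].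
          simpl. destruct (Rlt_dec 0 de); lra.
        + intros _ u y' Hu Hy'. destruct (HL' y' Hy') as [[[i de] y0] [Hin [Hde [Hq Hy0]]]].
          exists i. split. { apply in_map_iff. exists (i, de, y0); auto. }
          apply Hq.
          * assert (lmin (map (fun q : I * R * pt d => let de0 := snd (fst q) in
                   if Rlt_dec 0 de0 then de0 else 1) L') <= de).
            { eapply Rle_trans. apply lmin_le. apply in_map_iff. exists (i, de, y0); split; [reflexivity|exact Hin].
              simpl. destruct (Rlt_dec 0 de); lra. }
            lra.
          * intro j; specialize (Hy0 j); lra. }
    set (F := fun t => proj1_sig (constructive_indefinite_description _ (Htube t))).
    assert (HF : forall t, 0 < fst (F t) /\
      (a Fin.F1 <= t <= b Fin.F1 -> forall u y', Rabs (u - t) < fst (F t) -> inbox a' b' y' ->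
         exists i, In i (snd (F t)) /\ O i (pcons u y'))).
    { intro t. exact (proj2_sig (constructive_indefinite_description _ (Htube t))). }
    destruct (compact1 (a Fin.F1) (b Fin.F1) (fun t => fst (F t))) as [T HT].
    { intro t; apply HF. }
    exists (flat_map (fun t => snd (F t)) T). intros y Hy.
    destruct (HT (y Fin.F1) (Hy Fin.F1)) as [t [Hin [Hrt Hd]]].
    destruct (proj2 (HF t) Hrt (y Fin.F1) (fun j => y (Fin.FS j)) Hd) as [i [Hi HOi]].
    { intro j; apply (Hy (Fin.FS j)). }
    exists i. split. { apply in_flat_map. exists t; auto. }
    rewrite (pt_eta y). exact HOi.
Qed.

Lemma Rdiv_le_0_compat x y : 0 <= x -> 0 < y -> 0 <= x / y.
Proof. intros; unfold Rdiv; apply Rmult_le_pos; [auto|left; apply Rinv_0_lt_compat; auto]. Qed.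
Lemma Rle_div_l x y z : 0 < y -> x <= z * y -> x / y <= z.
Proof. intros Hy H. apply (Rmult_le_reg_r y); auto. replace (x / y * y) with x by (field; lra). auto. Qed.

Fixpoint rs (f : nat -> R) (M : nat) : R :=
  match M with O => 0 | S M' => rs f M' + f M' end.

Lemma rs_le f h M : (forall g, (g < M)%nat -> f g <= h g) -> rs f M <= rs h M.
Proof. induction M; simpl; intros H; [lra|]. assert (f M <= h M) by (apply H; lia).
  assert (rs f M <= rs h M) by (apply IHM; intros; apply H; lia). lra. Qed.
Lemma rs_ext f h M : (forall g, f g = h g) -> rs f M = rs h M.
Proof. intro H. f_equal. apply functional_extensionality; auto. Qed.
Lemma rs_nonneg f M : (forall g, 0 <= f g) -> 0 <= rs f M.
Proof. induction M; simpl; intros H; [lra|]. specialize (IHM H). specialize (H M). lra. Qed.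
Lemma rs_plus f h M : rs (fun g => f g + h g) M = rs f M + rs h M.
Proof. induction M; simpl; [lra|]. rewrite IHM; ring. Qed.
Lemma rs_scal c f M : rs (fun g => c * f g) M = c * rs f M.
Proof. induction M; simpl; [lra|]. rewrite IHM; ring. Qed.
Lemma rs_const c M : rs (fun _ => c) M = INR M * c.
Proof. induction M; [simpl; ring|]. change (rs (fun _ => c) M + c = INR (S M) * c). rewrite IHM, S_INR; ring. Qed.

Definition ncons {d} (g0 : nat) (g : Fin.t d -> nat) : Fin.t (S d) -> nat :=
  fun i => Fin.caseS' i (fun _ => nat) g0 g.

Fixpoint gsum (d M : nat) : ((Fin.t d -> nat) -> R) -> R :=
  match d with
  | O => fun F => F (fun i => Fin.case0 _ i)
  | S d' => fun F => rs (fun g0 => gsum d' M (fun g => F (ncons g0 g))) M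
  end.

Lemma gsum_le d M F G : (forall g, (forall i, (g i < M)%nat) -> F g <= G g) -> gsum d M F <= gsum d M G.
Proof.
  revert F G; induction d; simpl; intros F G H.
  - apply H. intro i; exact (Fin.case0 (fun i => (S (Fin.case0 (fun _ => nat) i) <= M)%nat) i).
  - apply rs_le; intros g0 Hg0. apply IHd. intros g Hg. apply H.
    intro i; pattern i; apply Fin.caseS'; simpl; auto.
Qed.
Lemma gsum_plus d M F G : gsum d M (fun g => F g + G g) = gsum d M F + gsum d M G.
Proof.
  revert F G; induction d; simpl; intros F G; [reflexivity|].
  rewrite <- rs_plus. f_equal. apply functional_extensionality; intro g0. apply IHd.
Qed.
Lemma gsum_scal d M c F : gsum d M (fun g => c * F g) = c * gsum d M F.
Proof.
  revert F; induction d; simpl; intros F; [reflexivity|].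
  rewrite <- rs_scal. f_equal. apply functional_extensionality; intro g0. apply IHd.
Qed.
Lemma gsum_zero d M : gsum d M (fun _ => 0) = 0.
Proof. transitivity (gsum d M (fun g => 0 * (fun _ => 1) g)).
  { f_equal; apply functional_extensionality; intros; ring. } rewrite gsum_scal; ring. Qed.

Lemma fprod_mult d f h : fprod d (fun i => f i * h i) = fprod d f * fprod d h.
Proof. revert f h; induction d; simpl; intros; [ring|]. rewrite IHd; ring. Qed.
Lemma fprod_const d c : fprod d (fun _ => c) = c ^ d.
Proof. induction d; simpl; auto. rewrite IHd; ring. Qed.
Lemma fprod_nonneg d f : (forall i, 0 <= f i) -> 0 <= fprod d f.
Proof. revert f; induction d; simpl; intros f H; [lra|]. apply Rmult_le_pos; auto. Qed.
Lemma fprod_le d f h : (forall i, 0 <= f i <= h i) -> fprod d f <= fprod d h.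
Proof. revert f h; induction d; simpl; intros f h H; [lra|].
  apply Rmult_le_compat; try apply H. apply fprod_nonneg; intro; apply H. apply IHd; intro; apply H. Qed.

Lemma gsum_prod d M (f : Fin.t d -> nat -> R) :
  gsum d M (fun g => fprod d (fun i => f i (g i))) = fprod d (fun i => rs (f i) M).
Proof.
  induction d; simpl; [reflexivity|].
  transitivity (rs (fun g0 => f Fin.F1 g0 * gsum d M (fun g => fprod d (fun i => f (Fin.FS i) (g i)))) M).
  { f_equal. apply functional_extensionality; intro g0. rewrite <- gsum_scal. reflexivity. }
  rewrite (IHd (fun i => f (Fin.FS i))).
  set (K := fprod d (fun i => rs (f (Fin.FS i)) M)).
  transitivity (rs (fun g0 => K * f Fin.F1 g0) M).
  { f_equal; apply functional_extensionality; intro; ring. }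
  rewrite rs_scal; ring.
Qed.

Definition chi (A B t : R) : R := if Rle_dec A t then if Rle_dec t B then 1 else 0 else 0.

Lemma chi_nonneg A B t : 0 <= chi A B t.
Proof. unfold chi; repeat destruct Rle_dec; lra. Qed.

Lemma count1 A B M : rs (fun g => chi A B (INR g)) M <= Rmax 0 (Rmin B (INR M - 1) - A + 1).
Proof.
  induction M.
  - simpl. apply Rmax_l.
  - change (rs (fun g => chi A B (INR g)) M + chi A B (INR M) <= Rmax 0 (Rmin B (INR (S M) - 1) - A + 1)).
    rewrite S_INR. replace (INR M + 1 - 1) with (INR M) by ring.
    assert (0 <= INR M) by apply pos_INR.
    revert IHM. unfold chi, Rmax, Rmin. repeat destruct Rle_dec; intros; lra.
Qed.

Lemma le_div_iff x y c : 0 < c -> (x <= c * y <-> x / c <= y).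
Proof. intros Hc; split; intro H.
  - apply (Rmult_le_reg_l c); auto. replace (c * (x / c)) with x by (field; lra). lra.
  - apply (Rmult_le_compat_l c) in H; [|lra]. replace (c * (x / c)) with x in H by (field; lra). lra.
Qed.

Lemma le_div_iff2 x y c : 0 < c -> (c * y <= x <-> y <= x / c).
Proof. intros Hc; split; intro H.
  - apply (Rmult_le_reg_l c); auto. replace (c * (x / c)) with x by (field; lra). lra.
  - apply (Rmult_le_compat_l c) in H; [|lra]. replace (c * (x / c)) with x in H by (field; lra). lra.
Qed.

Lemma count_box a b q s M : a <= b -> 0 < s -> (0 < M)%nat ->
  rs (fun g => chi a b (q + s * INR g / INR M)) M <= INR M * (b - a) / s + 1.
Proof.
  intros Hab Hs HM. assert (HM' : 0 < INR M) by (apply lt_0_INR; auto).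
  set (c := s / INR M). assert (Hc : 0 < c) by (unfold c; apply Rdiv_lt_0_compat; auto).
  set (A := (a - q) / c). set (B := (b - q) / c).
  assert (E : forall g, chi a b (q + s * INR g / INR M) = chi A B (INR g)).
  { intro g. unfold chi. replace (q + s * INR g / INR M) with (q + c * INR g) by (unfold c; field; lra).
    pose proof (le_div_iff (a - q) (INR g) c Hc). pose proof (le_div_iff2 (b - q) (INR g) c Hc).
    fold A in H. fold B in H0.
    destruct (Rle_dec a (q + c * INR g)); destruct (Rle_dec A (INR g)).
    - destruct (Rle_dec (q + c * INR g) b); destruct (Rle_dec (INR g) B); try reflexivity.
      + exfalso; apply n; apply H0; lra.
      + exfalso; apply n; apply H0 in r1; lra.
    - exfalso; apply n; apply H; lra.
    - exfalso; apply n; apply H in r; lra.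
    - reflexivity. }
  rewrite (rs_ext _ _ M E).
  eapply Rle_trans; [apply count1|].
  assert (A <= B) by (unfold A, B; apply Rmult_le_compat_r; [left; apply Rinv_0_lt_compat; auto|lra]).
  assert (B - A = INR M * (b - a) / s) by (unfold A, B, c; field; lra).
  unfold Rmax, Rmin. repeat destruct Rle_dec; lra.
Qed.

Lemma fprod_cont d l t : (forall i, 0 <= l i) -> 0 <= t <= 1 ->
  fprod d (fun i => l i + t) <= fprod d l + t * (2 ^ d * fprod d (fun i => l i + 1)).
Proof.
  revert l; induction d; simpl; intros l Hl Ht; [lra|].
  set (l' := fun i => l (Fin.FS i)).
  specialize (IHd l' (fun i => Hl (Fin.FS i)) Ht).
  change (fprod d (fun i => l (Fin.FS i) + t)) with (fprod d (fun i => l' i + t)).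
  change (fprod d (fun i => l (Fin.FS i))) with (fprod d l').
  change (fprod d (fun i => l (Fin.FS i) + 1)) with (fprod d (fun i => l' i + 1)).
  set (P0 := fprod d l') in *. set (C := fprod d (fun i => l' i + 1)) in *.
  set (Pt := fprod d (fun i => l' i + t)) in *.
  assert (0 <= P0) by (apply fprod_nonneg; intro; apply Hl).
  assert (P0 <= C) by (apply fprod_le; intro i; split; [apply Hl|]; specialize (Hl (Fin.FS i)); unfold l'; lra).
  assert (0 <= Pt) by (apply fprod_nonneg; intro i; specialize (Hl (Fin.FS i)); unfold l'; lra).
  assert (1 <= 2 ^ d) by (apply pow_R1_Rle; lra).
  pose proof (Hl Fin.F1) as Hl0.
  assert (Hm : (l Fin.F1 + t) * Pt <= (l Fin.F1 + t) * (P0 + t * (2 ^ d * C))) by (apply Rmult_le_compat_l; lra).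
  assert (0 <= C) by lra.
  set (K := 2 ^ d * C) in *.
  assert (HK : C <= K) by (unfold K; nra).
  assert (0 <= K) by lra.
  assert (t * P0 <= t * K) by (apply Rmult_le_compat_l; lra).
  assert (t * t * K <= t * K) by (apply Rmult_le_compat_r; nra).
  assert (0 <= l Fin.F1 * t * K) by (apply Rmult_le_pos; nra).
  replace (2 * 2 ^ d * ((l Fin.F1 + 1) * C)) with (2 * (l Fin.F1 + 1) * K) by (unfold K; ring).
  nra.
Qed.

Definition lsum (l : list R) : R := fold_right Rplus 0 l.

Lemma lsum_map_le {A} (f g : A -> R) l : (forall x, In x l -> f x <= g x) ->
  lsum (map f l) <= lsum (map g l).
Proof. induction l; simpl; intros H; [lra|]. pose proof (H a (or_introl eq_refl)).
  assert (lsum (map f l) <= lsum (map g l)) by (apply IHl; auto). lra. Qed.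
Lemma lsum_map_plus {A} (f g : A -> R) l : lsum (map (fun x => f x + g x) l) = lsum (map f l) + lsum (map g l).
Proof. induction l; simpl; [lra|]. rewrite IHl; ring. Qed.
Lemma lsum_map_scal {A} c (f : A -> R) l : lsum (map (fun x => c * f x) l) = c * lsum (map f l).
Proof. induction l; simpl; [lra|]. rewrite IHl; ring. Qed.
Lemma lsum_nonneg {A} (f : A -> R) l : (forall x, In x l -> 0 <= f x) -> 0 <= lsum (map f l).
Proof. induction l; simpl; intros H; [lra|]. pose proof (H a (or_introl eq_refl)).
  assert (0 <= lsum (map f l)) by (apply IHl; auto). lra. Qed.
Lemma lsum_ge {A} (f : A -> R) l y : (forall x, In x l -> 0 <= f x) -> In y l -> f y <= lsum (map f l).
Proof. induction l; simpl; intros H Hy; [contradiction|]. destruct Hy as [<-|Hy].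
  - assert (0 <= lsum (map f l)) by (apply lsum_nonneg; auto). lra.
  - pose proof (H a (or_introl eq_refl)). assert (f y <= lsum (map f l)) by (apply IHl; auto). lra. Qed.

Lemma gsum_lsum {A} d M (F : A -> (Fin.t d -> nat) -> R) l :
  gsum d M (fun g => lsum (map (fun B => F B g) l)) = lsum (map (fun B => gsum d M (F B)) l).
Proof. induction l; simpl. - apply gsum_zero. - rewrite gsum_plus, IHl. reflexivity. Qed.

Definition vol {d} (B : pt d * pt d) : R := fprod d (fun i => snd B i - fst B i).
Definition ind {d} (B : pt d * pt d) (y : pt d) : R := fprod d (fun i => chi (fst B i) (snd B i) (y i)).

Lemma fprod_one d f : (forall i, f i = 1) -> fprod d f = 1.
Proof. intro H. replace f with (fun _ : Fin.t d => 1) by (apply functional_extensionality; intro; auto).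
  rewrite fprod_const, pow1; auto. Qed.

Lemma ind_in {d} (B : pt d * pt d) y : inbox (fst B) (snd B) y -> ind B y = 1.
Proof. intro H. apply fprod_one. intro i. unfold chi. destruct (H i).
  repeat destruct Rle_dec; try lra. Qed.

Lemma cover_volume d (q : pt d) (s : R) (BL : list (pt d * pt d)) : 0 < s ->
  (forall B, In B BL -> forall i, fst B i <= snd B i) ->
  (forall y, inbox q (fun i => q i + s) y -> exists B, In B BL /\ inbox (fst B) (snd B) y) ->
  s ^ d <= lsum (map vol BL).
Proof.
  intros Hs Hab Hcov.
  set (CC := lsum (map (fun B => 2 ^ d * fprod d (fun i => (snd B i - fst B i) / s + 1)) BL)).
  assert (HCC : 0 <= CC).
  { apply lsum_nonneg. intros B HB. apply Rmult_le_pos. apply pow_le; lra. apply fprod_nonneg.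
    intro i. specialize (Hab B HB i). assert (0 <= snd B i - fst B i) by (apply Rge_le, Rge_minus, Rle_ge; exact Hab). assert (0 <= (snd B i - fst B i) / s) by (apply Rdiv_le_0_compat; [lra|exact Hs]). cbv beta; lra. }
  assert (Key : forall M, (0 < M)%nat -> 1 <= lsum (map vol BL) / s ^ d + / INR M * CC).
  { intros M HM. assert (HM' : 0 < INR M) by (apply lt_0_INR; auto).
    set (p := fun (g : Fin.t d -> nat) i => q i + s * INR (g i) / INR M).
    assert (H1 : INR M ^ d <= gsum d M (fun g => lsum (map (fun B => ind B (p g)) BL))).
    { replace (INR M ^ d) with (gsum d M (fun g => fprod d (fun i => (fun _ _ => 1) i (g i)))).
      2: { rewrite (gsum_prod d M (fun _ _ => 1)). rewrite <- fprod_const. f_equal. apply functional_extensionality; intro i.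
           rewrite rs_const; ring. }
      apply gsum_le. intros g Hg. rewrite fprod_one by auto.
      destruct (Hcov (p g)) as [B [HB Hin]].
      { intro i. unfold p. specialize (Hg i). assert (INR (g i) < INR M) by (apply lt_INR; auto).
        assert (0 <= INR (g i)) by apply pos_INR.
        assert (0 <= s * INR (g i) / INR M) by (apply Rdiv_le_0_compat; nra).
        assert (s * INR (g i) / INR M <= s). { apply Rle_div_l; auto. nra. }
        lra. }
      rewrite <- (ind_in B (p g) Hin). apply (lsum_ge (fun B => ind B (p g))); auto.
      intros; apply fprod_nonneg; intro; apply chi_nonneg. }
    rewrite gsum_lsum in H1.
    assert (H2 : lsum (map (fun B => gsum d M (fun g => ind B (p g))) BL) <=
                 lsum (map (fun B => INR M ^ d * (vol B / s ^ d + / INR M * (2 ^ d * fprod d (fun i => (snd B i - fst B i) / s + 1)))) BL)).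
    { apply lsum_map_le. intros B HB. unfold ind, p.
      rewrite (gsum_prod d M (fun i g => chi (fst B i) (snd B i) (q i + s * INR g / INR M))).
      eapply Rle_trans.
      { apply fprod_le. intro i. split. - apply rs_nonneg; intro; apply chi_nonneg.
        - apply count_box; auto. }
      replace (fprod d (fun i => INR M * (snd B i - fst B i) / s + 1)) with
        (INR M ^ d * fprod d (fun i => (snd B i - fst B i) / s + / INR M)).
      2: { rewrite <- fprod_const, <- fprod_mult. f_equal. apply functional_extensionality; intro i. field; lra. }
      apply Rmult_le_compat_l. apply pow_le; lra.
      replace (vol B / s ^ d) with (fprod d (fun i => (snd B i - fst B i) / s)).
      2: { unfold vol, Rdiv. rewrite (fprod_mult d (fun i => snd B i - fst B i) (fun _ => / s)), fprod_const, pow_inv. reflexivity. }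
      apply fprod_cont.
      - intro i. specialize (Hab B HB i). apply Rdiv_le_0_compat; [apply Rge_le, Rge_minus, Rle_ge; exact Hab|exact Hs].
      - split. left; apply Rinv_0_lt_compat; auto. rewrite <- Rinv_1. apply Rinv_le_contravar; [lra|].
        apply (le_INR 1); auto. }
    assert (H3 : lsum (map (fun B => INR M ^ d * (vol B / s ^ d + / INR M * (2 ^ d * fprod d (fun i => (snd B i - fst B i) / s + 1)))) BL)
       = INR M ^ d * (lsum (map vol BL) / s ^ d + / INR M * CC)).
    { rewrite lsum_map_scal, lsum_map_plus. unfold CC. rewrite lsum_map_scal.
      f_equal. f_equal. unfold Rdiv. rewrite Rmult_comm, <- lsum_map_scal.
      f_equal. apply map_ext; intro; ring. }
    assert (HMd : 0 < INR M ^ d) by (apply pow_lt; auto).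
    apply (Rmult_le_reg_l (INR M ^ d)); auto. lra. }
  destruct (Rle_dec (s ^ d) (lsum (map vol BL))) as [Hle|Hlt]; auto. exfalso.
  assert (Hsd : 0 < s ^ d) by (apply pow_lt; auto).
  assert (He : 0 < 1 - lsum (map vol BL) / s ^ d).
  { assert (lsum (map vol BL) / s ^ d < 1); [|lra]. apply (Rmult_lt_reg_r (s ^ d)); auto.
    replace (lsum (map vol BL) / s ^ d * s ^ d) with (lsum (map vol BL)) by (field; lra). lra. }
  destruct (archimed_cor1 ((1 - lsum (map vol BL) / s ^ d) / (CC + 1))) as [M [HM1 HM2]].
  { apply Rdiv_lt_0_compat; lra. }
  specialize (Key M HM2).
  assert (HMp : 0 < / INR M) by (apply Rinv_0_lt_compat, lt_0_INR; auto).
  assert (/ INR M * (CC + 1) < 1 - lsum (map vol BL) / s ^ d).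
  { apply (Rmult_lt_compat_r (CC + 1)) in HM1; [|lra]. replace ((1 - lsum (map vol BL) / s ^ d) / (CC + 1) * (CC + 1))
      with (1 - lsum (map vol BL) / s ^ d) in HM1 by (field; lra). lra. }
  nra.
Qed.


Lemma Rabs_le_inv x b : Rabs x <= b -> - b <= x <= b.
Proof. unfold Rabs; destruct Rcase_abs; intros; lra. Qed.

Fixpoint fin_enum (d : nat) : list (Fin.t d) :=
  match d with O => [] | S d' => Fin.F1 :: map Fin.FS (fin_enum d') end.

Lemma fin_enum_all d (i : Fin.t d) : In i (fin_enum d).
Proof. induction i; simpl; [left; auto|right]. apply in_map; auto. Qed.

Definition ebas {d} (j : Fin.t d) : pt d := fun i => if Fin.eq_dec i j then 1 else 0.

Section Norm.
Variable d : nat.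
Variable N : pt d -> R.
Hypothesis hN : is_norm d N.

Lemma N_nonneg v : 0 <= N v. Proof. apply hN. Qed.
Lemma N_scal c v : N (pscal c v) = Rabs c * N v. Proof. apply hN. Qed.
Lemma N_tri v w : N (padd v w) <= N v + N w. Proof. apply hN. Qed.
Lemma N_zero : N (fun _ => 0) = 0.
Proof. replace (fun _ : Fin.t d => 0) with (pscal 0 (fun _ : Fin.t d => 0)).
  rewrite N_scal, Rabs_R0; ring. apply functional_extensionality; intro; unfold pscal; ring. Qed.

Definition vres (v : pt d) (l : list (Fin.t d)) : pt d :=
  fun i => if in_dec Fin.eq_dec i l then v i else 0.

Lemma N_res v rho l : (forall i, Rabs (v i) <= rho) ->
  N (vres v l) <= rho * lsum (map (fun j => N (ebas j)) l).
Proof.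
  intro Hv. induction l; simpl.
  - replace (vres v []) with (fun _ : Fin.t d => 0). rewrite N_zero; lra.
    apply functional_extensionality; intro i; unfold vres; simpl; reflexivity.
  - replace (vres v (a :: l)) with (padd (pscal (if in_dec Fin.eq_dec a l then 0 else v a) (ebas a)) (vres v l)).
    + eapply Rle_trans; [apply N_tri|]. rewrite N_scal.
      assert (Rabs (if in_dec Fin.eq_dec a l then 0 else v a) <= rho).
      { destruct in_dec. rewrite Rabs_R0. eapply Rle_trans; [apply Rabs_pos|apply (Hv a)]. apply Hv. }
      assert (0 <= N (ebas a)) by apply N_nonneg.
      assert (Rabs (if in_dec Fin.eq_dec a l then 0 else v a) * N (ebas a) <= rho * N (ebas a))
        by (apply Rmult_le_compat_r; auto).
      lra.
    + apply functional_extensionality; intro i. unfold padd, pscal, vres, ebas.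
      destruct (Fin.eq_dec i a) as [->|Hne].
      * destruct (in_dec Fin.eq_dec a (a :: l)) as [_|Hn]; [|exfalso; apply Hn; left; auto].
        destruct (Fin.eq_dec a a); [|contradiction]. destruct (in_dec Fin.eq_dec a l); ring.
      * destruct (Fin.eq_dec i a); [contradiction|].
        destruct (in_dec Fin.eq_dec i l) as [H1|H1]; destruct (in_dec Fin.eq_dec i (a :: l)) as [H2|H2]; try ring.
        -- exfalso; apply H2; right; auto.
        -- destruct H2 as [H2|H2]; [symmetry in H2; contradiction|contradiction].
Qed.

Definition Cn : R := lsum (map (fun j => N (ebas j)) (fin_enum d)).

Lemma Cn_nonneg : 0 <= Cn.
Proof. unfold Cn. apply lsum_nonneg. intros; apply N_nonneg. Qed.

Lemma N_upper v rho : (forall i, Rabs (v i) <= rho) -> N v <= rho * Cn.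
Proof.
  intro Hv. replace v with (vres v (fin_enum d)) at 1. apply N_res; auto.
  apply functional_extensionality; intro i. unfold vres. destruct in_dec; auto.
  exfalso; apply n; apply fin_enum_all.
Qed.

Lemma N_sub_sym v w : N (psub v w) = N (psub w v).
Proof. replace (psub v w) with (pscal (-1) (psub w v)). rewrite N_scal.
  replace (Rabs (-1)) with 1 by (rewrite Rabs_left; lra). ring.
  apply functional_extensionality; intro; unfold pscal, psub; ring. Qed.

Lemma N_rev_tri v w : N v - N (psub v w) <= N w.
Proof. replace v with (padd w (psub v w)) at 1. pose proof (N_tri w (psub v w)). lra.
  apply functional_extensionality; intro; unfold padd, psub; ring. Qed.

Lemma face_lower j : exists m, 0 < m /\ forall w, w j = 1 -> (forall i, Rabs (w i) <= 1) -> m <= N w.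
Proof.
  set (a := fun i => if Fin.eq_dec i j then 1 else -1). set (b := fun _ : Fin.t d => 1).
  set (O := fun (v w : pt d) => inbox a b v /\ forall i, Rabs (w i - v i) < N v / (2 * (Cn + 1))).
  assert (HC := Cn_nonneg).
  assert (Hpos : forall v, inbox a b v -> 0 < N v).
  { intros v Hv. destruct (N_nonneg v) as [H|H]; auto. exfalso.
    pose proof (proj1 (proj2 hN) v (eq_sym H) j). specialize (Hv j). unfold a, b in Hv.
    destruct (Fin.eq_dec j j); [lra|contradiction]. }
  destruct (box_compact d a b (pt d) O) as [L HL].
  - intros v w [Hv Hw]. destruct (sbox_open v _ w Hw) as [e [He He']]. exists e; split; auto.
    intros z Hz. split; auto.
  - intros w Hw. exists w. split; auto. intro i. rewrite Rminus_diag, Rabs_R0.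
    specialize (Hpos w Hw). apply Rdiv_lt_0_compat; lra.
  - exists (lmin (map (fun v => if Rlt_dec 0 (N v) then N v / 2 else 1) L)). split.
    + apply lmin_pos. intros z Hz. apply in_map_iff in Hz. destruct Hz as [v [<- _]].
      destruct Rlt_dec; lra.
    + intros w Hwj Hw. destruct (HL w) as [v [HvL [Hv Hwv]]].
      { intro i. unfold a, b. destruct (Fin.eq_dec i j) as [->|]; [rewrite Hwj; lra|].
        specialize (Hw i). apply Rabs_le_inv in Hw. lra. }
      specialize (Hpos v Hv).
      eapply Rle_trans. { apply lmin_le. apply in_map_iff. exists v; split; [reflexivity|exact HvL]. }
      destruct Rlt_dec; [|lra].
      assert (N (psub w v) <= N v / (2 * (Cn + 1)) * Cn).
      { apply N_upper. intro i. left. apply Hwv. }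
      assert (N v / (2 * (Cn + 1)) * Cn <= N v / 2).
      { unfold Rdiv. rewrite Rinv_mult. assert (0 < / (Cn + 1)) by (apply Rinv_0_lt_compat; lra).
        assert (/ (Cn + 1) * Cn <= 1).
        { apply (Rmult_le_reg_l (Cn + 1)); [lra|]. rewrite <- Rmult_assoc, Rinv_r; lra. }
        assert (0 <= N v * / 2) by lra.
        replace (N v * (/ 2 * / (Cn + 1)) * Cn) with ((N v * / 2) * (/ (Cn + 1) * Cn)) by ring.
        replace (N v * / 2) with ((N v * / 2) * 1) at 2 by ring.
        apply Rmult_le_compat_l; auto. }
      pose proof (N_rev_tri v w). rewrite N_sub_sym in H1. lra.
Qed.

Lemma list_argmax {A} (f : A -> R) (l : list A) (a : A) : In a l ->
  exists j, In j l /\ forall i, In i l -> f i <= f j.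
Proof.
  revert a; induction l as [|x l IH]; intros a0 Ha; [contradiction|].
  destruct l as [|y l'].
  - exists x. split; [left; auto|]. intros i [<-|[]]; lra.
  - destruct (IH y (or_introl eq_refl)) as [j [Hj Hmax]].
    destruct (Rle_dec (f x) (f j)).
    + exists j. split; [right; auto|]. intros i [<-|Hi]; auto.
    + exists x. split; [left; auto|]. intros i [<-|Hi]; [lra|]. specialize (Hmax i Hi). lra.
Qed.

Lemma norm_lower : exists c, 0 < c /\ forall v i, c * Rabs (v i) <= N v.
Proof.
  destruct (fin_min d (fun j m => forall w, w j = 1 -> (forall i, Rabs (w i) <= 1) -> m <= N w)) as [m [Hm Hmw]].
  - apply face_lower.
  - intros j e e' He H w H1 H2. specialize (H w H1 H2). lra.
  - exists m. split; auto. intros v i.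
    destruct (list_argmax (fun i => Rabs (v i)) (fin_enum d) i (fin_enum_all d i)) as [j [_ Hj]].
    assert (Hji : forall i', Rabs (v i') <= Rabs (v j)) by (intro i'; apply Hj; apply fin_enum_all).
    destruct (Req_dec (v j) 0) as [H0|H0].
    + specialize (Hji i). rewrite H0, Rabs_R0 in Hji. pose proof (Rabs_pos (v i)).
      assert (Rabs (v i) = 0) by lra. rewrite H1. pose proof (N_nonneg v). lra.
    + set (w := pscal (/ v j) v).
      assert (Hw : m <= N w).
      { apply (Hmw j). unfold w, pscal. field; auto.
        intro i'. unfold w, pscal. rewrite Rabs_mult, Rabs_inv.
        assert (0 < Rabs (v j)) by (apply Rabs_pos_lt; auto).
        apply (Rmult_le_reg_l (Rabs (v j))); auto. rewrite <- Rmult_assoc, Rinv_r by lra.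
        specialize (Hji i'). lra. }
      replace v with (pscal (v j) w) at 2.
      2: { apply functional_extensionality; intro; unfold w, pscal. field; auto. }
      rewrite N_scal. specialize (Hji i). pose proof (Rabs_pos (v i)).
      assert (Rabs (v i) * m <= Rabs (v j) * m) by (apply Rmult_le_compat_r; lra).
      assert (Rabs (v j) * m <= Rabs (v j) * N w) by (apply Rmult_le_compat_l; [apply Rabs_pos|auto]).
      lra.
Qed.

End Norm.


Fixpoint msearch (P : nat -> nat) (n fuel i : nat) : nat :=
  match fuel with
  | O => i
  | S f => if Nat.leb n (P i) then i else msearch P n f (S i)
  end.

Lemma msearch_spec P n : forall fuel i, (n <= P (i + fuel))%nat ->
  (n <= P (msearch P n fuel i))%nat /\ (i <= msearch P n fuel i)%nat /\
  forall i', (i <= i' < msearch P n fuel i)%nat -> (P i' < n)%nat.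
Proof.
  induction fuel; intros i H; simpl.
  - rewrite Nat.add_0_r in H. split; auto. split; auto. intros; lia.
  - destruct (Nat.leb n (P i)) eqn:E.
    + apply Nat.leb_le in E. split; auto. split; auto. intros; lia.
    + apply Nat.leb_gt in E. destruct (IHfuel (S i)) as [H1 [H2 H3]].
      { replace (S i + fuel)%nat with (i + S fuel)%nat by lia. auto. }
      split; auto. split; [lia|]. intros i' Hi'.
      destruct (Nat.eq_dec i' i) as [->|]; auto. apply H3; lia.
Qed.

Lemma lsum_app l1 l2 : lsum (l1 ++ l2) = lsum l1 + lsum l2.
Proof. induction l1; simpl; [ring|]. rewrite IHl1; ring. Qed.

Lemma lsum_seq_const f a n c : (forall i, (a <= i < a + n)%nat -> f i = c) ->
  lsum (map f (seq a n)) = INR n * c.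
Proof.
  revert a; induction n; intros a H; [simpl; ring|].
  change (lsum (map f (seq a (S n)))) with (f a + lsum (map f (seq (S a) n))).
  rewrite (IHn (S a)). rewrite (H a) by lia. rewrite S_INR. ring.
  intros; apply H; lia.
Qed.

Lemma inv2_pow_le a b : (a <= b)%nat -> (/2) ^ b <= (/2) ^ a.
Proof.
  intro H. replace b with (a + (b - a))%nat by lia. rewrite pow_add.
  assert (0 < (/2)^a) by (apply pow_lt; lra).
  assert ((/2) ^ (b - a) <= 1). { rewrite <- (pow1 (b - a)). apply pow_incr. lra. }
  nra.
Qed.

Lemma INR_unbounded x : exists n : nat, x < INR n.
Proof.
  destruct (archimed x) as [H1 _]. exists (Z.to_nat (up x)).
  destruct (Z_le_gt_dec 0 (up x)).
  - rewrite INR_IZR_INZ, Z2Nat.id by lia; lra.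
  - assert (IZR (up x) < 0) by (apply IZR_lt; lia). pose proof (pos_INR (Z.to_nat (up x))). lra.
Qed.

Section Seq.
Variable d : nat.
Hypothesis hd : (1 <= d)%nat.
Variable H : nat -> nat.
Hypothesis HH0 : forall m, (m + 3 <= H m)%nat.
Hypothesis HHS : forall m, (S (H m) <= H (S m))%nat.
Variable c : R.
Hypothesis hc : 0 < c.

Definition Pn (m : nat) : nat := (2 ^ (d * H m))%nat.

Lemma H_mono m m' : (m <= m')%nat -> (H m <= H m')%nat.
Proof. intro Hle; induction Hle as [|m' Hle IH]; [lia|]. pose proof (HHS m'). lia. Qed.

Lemma pow2_gt n : (n < 2 ^ n)%nat.
Proof. induction n; simpl; lia. Qed.

Lemma Pn_gt m : (m < Pn m)%nat.
Proof. unfold Pn. pose proof (pow2_gt (d * H m)). specialize (HH0 m). nia. Qed.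

Lemma Pn_double m : (2 * Pn m <= Pn (S m))%nat.
Proof. unfold Pn. specialize (HHS m).
  replace (d * H (S m))%nat with (d * H m + d * (H (S m) - H m))%nat by nia.
  rewrite Nat.pow_add_r. assert (1 <= d * (H (S m) - H m))%nat by nia.
  assert (2 <= 2 ^ (d * (H (S m) - H m)))%nat.
  { replace (d * (H (S m) - H m))%nat with (S (d * (H (S m) - H m) - 1)) by lia. simpl.
    pose proof (Nat.pow_nonzero 2 (d * (H (S m) - H m) - 1)). lia. }
  nia.
Qed.

Lemma Pn_mono m m' : (m <= m')%nat -> (Pn m <= Pn m')%nat.
Proof. intro Hle; induction Hle as [|m' Hle IH]; [lia|]. pose proof (Pn_double m'). lia. Qed.

Definition mf (n : nat) : nat := msearch Pn n n 0.

Lemma mf_spec n : (n <= Pn (mf n))%nat /\ forall i', (i' < mf n)%nat -> (Pn i' < n)%nat.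
Proof.
  destruct (msearch_spec Pn n n 0) as [H1 [_ H3]].
  { simpl. pose proof (Pn_gt n). lia. }
  split; auto. intros i' Hi. apply H3. unfold mf in Hi. lia.
Qed.

Lemma mf_mono n n' : (n <= n')%nat -> (mf n <= mf n')%nat.
Proof.
  intro Hn. destruct (Nat.le_gt_cases (mf n) (mf n')); auto.
  destruct (mf_spec n) as [_ H2]. destruct (mf_spec n') as [H3 _]. specialize (H2 _ H0). lia.
Qed.

Lemma mf_gt n m : (Pn m < n)%nat -> (m < mf n)%nat.
Proof.
  intro Hn. destruct (Nat.le_gt_cases (mf n) m); auto.
  destruct (mf_spec n) as [H1 _]. pose proof (Pn_mono _ _ H0). lia.
Qed.

Definition rr (n : nat) : R := c * (/2) ^ (H (mf n)).

Lemma rr_pos n : 0 < rr n.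
Proof. unfold rr. apply Rmult_lt_0_compat; auto. apply pow_lt; lra. Qed.

Lemma inv2_pow_d h : ((/2) ^ h) ^ d = / INR (2 ^ (d * h))%nat.
Proof. rewrite pow_INR, <- pow_mult, Nat.mul_comm, pow_inv. simpl INR. replace (1 + 1) with 2 by ring. reflexivity. Qed.

Lemma block_sum m : INR (S m) * c ^ d / 2 <= lsum (map (fun n => rr n ^ d) (seq 1 (Pn m))).
Proof.
  assert (Hcd : 0 < c ^ d) by (apply pow_lt; auto).
  induction m.
  - rewrite (lsum_seq_const _ 1 (Pn 0) (c ^ d / INR (Pn 0))).
    + assert (0 < INR (Pn 0)) by (apply lt_0_INR; pose proof (Pn_gt 0); lia).
      replace (INR (Pn 0) * (c ^ d / INR (Pn 0))) with (c ^ d) by (field; lra). simpl; lra.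
    + intros n Hn. assert (Hmf : mf n = 0%nat).
      { destruct (mf_spec n) as [_ H2]. destruct (mf n); auto. specialize (H2 0%nat ltac:(lia)). lia. }
      unfold rr. rewrite Hmf, Rpow_mult_distr, inv2_pow_d. unfold Pn; field.
      apply not_0_INR. apply Nat.pow_nonzero; lia.
  - pose proof (Pn_double m).
    replace (Pn (S m)) with (Pn m + (Pn (S m) - Pn m))%nat by lia.
    rewrite seq_app, map_app, lsum_app.
    rewrite (lsum_seq_const _ (1 + Pn m) _ (c ^ d / INR (Pn (S m)))).
    + assert (0 < INR (Pn (S m))) by (apply lt_0_INR; pose proof (Pn_gt (S m)); lia).
      assert (INR (Pn (S m) - Pn m) * (c ^ d / INR (Pn (S m))) >= c ^ d / 2).
      { rewrite minus_INR by lia. assert (2 * INR (Pn m) <= INR (Pn (S m))).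
        { replace 2 with (INR 2) by reflexivity. rewrite <- mult_INR. apply le_INR; lia. }
        unfold Rdiv. apply Rle_ge.
        apply (Rmult_le_reg_r (INR (Pn (S m)))); auto.
        replace ((INR (Pn (S m)) - INR (Pn m)) * (c ^ d * / INR (Pn (S m))) * INR (Pn (S m)))
          with ((INR (Pn (S m)) - INR (Pn m)) * c ^ d) by (field; lra).
        nra. }
      rewrite S_INR. lra.
    + intros n Hn. assert (Hmf : mf n = S m).
      { pose proof (mf_gt n m ltac:(lia)). destruct (mf_spec n) as [_ H2].
        destruct (Nat.le_gt_cases (mf n) (S m)); [lia|]. match goal with Hx : (S m < mf n)%nat |- _ => specialize (H2 _ Hx) end. lia. }
      unfold rr. rewrite Hmf, Rpow_mult_distr, inv2_pow_d. unfold Pn; field.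
      apply not_0_INR. apply Nat.pow_nonzero; lia.
Qed.

Lemma sum_f_lsum f K : sum_f_R0 (fun i => f (S i)) K = lsum (map f (seq 1 (S K))).
Proof.
  induction K; [simpl; ring|].
  change (sum_f_R0 (fun i => f (S i)) (S K)) with (sum_f_R0 (fun i => f (S i)) K + f (S (S K))).
  rewrite IHK, (seq_S (S K) 1), map_app, lsum_app. unfold lsum at 3. simpl map. simpl fold_right.
  replace (1 + S K)%nat with (S (S K)) by lia. ring.
Qed.

Lemma rr_Pd : in_Pd d rr.
Proof.
  split; [|split].
  - intros n _. unfold rr. apply Rmult_le_compat_l; [lra|]. apply inv2_pow_le. apply H_mono, mf_mono; lia.
  - intros eps Heps. destruct (pow_lt_1_zero (/2) ltac:(rewrite Rabs_right; lra) (eps / c)) as [M0 HM0].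
    { apply Rdiv_lt_0_compat; auto. }
    exists (S (Pn M0)). intros n Hn. pose proof (mf_gt n M0 ltac:(lia)).
    rewrite Rabs_right by (left; apply rr_pos). unfold rr.
    specialize (HM0 M0 (le_n _)). rewrite Rabs_right in HM0 by (left; apply pow_lt; lra).
    assert ((/2) ^ H (mf n) <= (/2) ^ M0) by (apply inv2_pow_le; pose proof (HH0 (mf n)); lia).
    apply (Rmult_lt_compat_l c) in HM0; auto. replace (c * (eps / c)) with eps in HM0 by (field; lra).
    nra.
  - intro Mb. destruct (INR_unbounded (2 * Mb / c ^ d)) as [m Hm].
    assert (Hcd : 0 < c ^ d) by (apply pow_lt; auto).
    exists (Pn m - 1)%nat. rewrite (sum_f_lsum (fun n => rr n ^ d)).
    replace (S (Pn m - 1)) with (Pn m) by (pose proof (Pn_gt m); lia).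
    eapply Rlt_le_trans; [|apply block_sum]. rewrite S_INR.
    apply (Rmult_lt_compat_r (c ^ d)) in Hm; auto.
    replace (2 * Mb / c ^ d * c ^ d) with (2 * Mb) in Hm by (field; lra). nra.
Qed.

End Seq.


Lemma powerRZ_gen j0 (J : nat) : powerRZ 2 (- (j0 + Z.of_nat J)) = powerRZ 2 (- j0) / 2 ^ J.
Proof.
  replace (- (j0 + Z.of_nat J))%Z with (- j0 + - Z.of_nat J)%Z by lia.
  rewrite powerRZ_add by lra. rewrite (powerRZ_neg' 2 (Z.of_nat J)), <- pow_powerRZ. unfold Rdiv; reflexivity.
Qed.

Lemma powerRZ_pos z : 0 < powerRZ 2 z.
Proof. apply powerRZ_lt; lra. Qed.

Lemma floor_ex (r : R) : exists f : Z, IZR f <= r < IZR f + 1.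
Proof. destruct (archimed r) as [H1 H2]. exists (up r - 1)%Z. rewrite minus_IZR. simpl. lra. Qed.

Lemma dyadic_sub d j0 (k : Fin.t d -> Z) (J : nat) (z : pt d) : in_cube j0 k z ->
  exists k', in_cube (j0 + Z.of_nat J) k' z /\
    forall y, in_cube (j0 + Z.of_nat J) k' y -> in_cube j0 k y.
Proof.
  intro Hz. unfold in_cube in *. rewrite powerRZ_gen.
  set (S0 := powerRZ 2 (- j0)) in *. assert (HS0 : 0 < S0) by apply powerRZ_pos.
  set (Q := 2 ^ J). assert (HQ : 0 < Q) by (apply pow_lt; lra).
  set (Qz := (2 ^ Z.of_nat J)%Z). assert (HQz : IZR Qz = Q) by (unfold Qz, Q; rewrite <- pow_IZR; reflexivity).
  assert (Hf : forall i, exists f, IZR f <= z i * Q / S0 < IZR f + 1) by (intro; apply floor_ex).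
  set (k' := fun i => proj1_sig (constructive_indefinite_description _ (Hf i))).
  assert (Hk' : forall i, IZR (k' i) <= z i * Q / S0 < IZR (k' i) + 1).
  { intro i. exact (proj2_sig (constructive_indefinite_description _ (Hf i))). }
  assert (HW : forall t, S0 / Q * t = S0 * t / Q) by (intro; field; lra).
  exists k'. split.
  - intro i. specialize (Hk' i). destruct Hk' as [H1 H2]. split.
    + apply (Rmult_le_reg_r (Q / S0)). apply Rdiv_lt_0_compat; auto.
      replace (S0 / Q * IZR (k' i) * (Q / S0)) with (IZR (k' i)) by (field; lra).
      replace (z i * (Q / S0)) with (z i * Q / S0) by (field; lra). lra.
    + apply (Rmult_lt_reg_r (Q / S0)). apply Rdiv_lt_0_compat; auto.
      replace (S0 / Q * (IZR (k' i) + 1) * (Q / S0)) with (IZR (k' i) + 1) by (field; lra).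
      replace (z i * (Q / S0)) with (z i * Q / S0) by (field; lra). lra.
  - intros y Hy i. specialize (Hk' i). specialize (Hz i). specialize (Hy i).
    destruct Hk' as [H1 H2]. destruct Hz as [Hz1 Hz2]. destruct Hy as [Hy1 Hy2].
    assert (A1 : IZR (k i) * Q <= z i * Q / S0).
    { apply (Rmult_le_reg_r (S0 / Q)). apply Rdiv_lt_0_compat; auto.
      replace (IZR (k i) * Q * (S0 / Q)) with (S0 * IZR (k i)) by (field; lra).
      replace (z i * Q / S0 * (S0 / Q)) with (z i) by (field; lra). lra. }
    assert (A2 : z i * Q / S0 < (IZR (k i) + 1) * Q).
    { apply (Rmult_lt_reg_r (S0 / Q)). apply Rdiv_lt_0_compat; auto.
      replace ((IZR (k i) + 1) * Q * (S0 / Q)) with (S0 * (IZR (k i) + 1)) by (field; lra).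
      replace (z i * Q / S0 * (S0 / Q)) with (z i) by (field; lra). lra. }
    assert (B1 : (k i * Qz <= k' i)%Z).
    { assert (IZR (k i * Qz) < IZR (k' i + 1)) by (rewrite mult_IZR, plus_IZR, HQz; lra).
      apply lt_IZR in H. lia. }
    assert (B2 : (k' i + 1 <= k i * Qz + Qz)%Z).
    { assert (IZR (k' i) < IZR (k i * Qz + Qz)) by (rewrite plus_IZR, mult_IZR, HQz; lra).
      apply lt_IZR in H. lia. }
    apply IZR_le in B1. apply IZR_le in B2. rewrite mult_IZR, HQz in B1.
    rewrite plus_IZR, plus_IZR, mult_IZR, HQz in B2. simpl in B2.
    assert (HSQ : 0 < S0 / Q) by (apply Rdiv_lt_0_compat; auto).
    split.
    + assert (S0 / Q * (IZR (k i) * Q) <= S0 / Q * IZR (k' i)) by (apply Rmult_le_compat_l; lra).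
      replace (S0 / Q * (IZR (k i) * Q)) with (S0 * IZR (k i)) in H by (field; lra). lra.
    + assert (S0 / Q * (IZR (k' i) + 1) <= S0 / Q * (IZR (k i) * Q + Q)) by (apply Rmult_le_compat_l; lra).
      replace (S0 / Q * (IZR (k i) * Q + Q)) with (S0 * (IZR (k i) + 1)) in H by (field; lra). lra.
Qed.


Lemma obox_open {d} (al be : pt d) : sopen (fun y => forall i, al i < y i < be i).
Proof.
  intros y Hy.
  destruct (fin_min d (fun j e => forall z, Rabs (z - y j) < e -> al j < z < be j)) as [e [He Hp]].
  - intro j. exists (Rmin (y j - al j) (be j - y j)). specialize (Hy j). split.
    { apply Rmin_glb_lt; lra. }
    intros z Hz. pose proof (Rmin_l (y j - al j) (be j - y j)). pose proof (Rmin_r (y j - al j) (be j - y j)).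
    unfold Rabs in Hz; destruct Rcase_abs in Hz; lra.
  - intros j e1 e2 [He2 Hle] H z Hz. apply H. lra.
  - exists e. split; [exact He|]. intros z Hz j. exact (Hp j _ (Hz j)).
Qed.

Lemma geo_seq a n : lsum (map (fun k => (/2) ^ k) (seq a n)) = 2 * (/2) ^ a - 2 * (/2) ^ (a + n).
Proof.
  revert a; induction n; intro a.
  - simpl. rewrite Nat.add_0_r. ring.
  - change (lsum (map (fun k => (/2) ^ k) (seq a (S n)))) with ((/2) ^ a + lsum (map (fun k => (/2) ^ k) (seq (S a) n))).
    rewrite IHn. replace (a + S n)%nat with (S a + n)%nat by lia. simpl. field.
Qed.

Lemma geo_bound a n : lsum (map (fun k => (/2) ^ (k + a)) (seq 0 n)) <= 2 * (/2) ^ a.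
Proof.
  replace (map (fun k => (/2) ^ (k + a)) (seq 0 n)) with (map (fun k => (/2) ^ a * (/2) ^ k) (seq 0 n)).
  - rewrite lsum_map_scal, geo_seq. simpl. assert (0 <= (/2) ^ n) by (apply pow_le; lra).
    assert (0 < (/2) ^ a) by (apply pow_lt; lra). nra.
  - apply map_ext. intro k. rewrite pow_add. ring.
Qed.

Lemma lsum_seq_sum f n : lsum (map f (seq 0 (S n))) = sum_f_R0 f n.
Proof.
  induction n; [simpl; ring|].
  rewrite (seq_S (S n) 0), map_app, lsum_app, IHn. simpl. ring.
Qed.

Lemma lsum_flat_map {A B} (f : B -> R) (g : A -> list B) l :
  lsum (map f (flat_map g l)) = lsum (map (fun m => lsum (map f (g m))) l).
Proof. induction l; simpl; [reflexivity|]. rewrite map_app, lsum_app, IHl. reflexivity. Qed.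

Definition maxl1 (L : list (nat + (nat * nat))) : nat :=
  fold_right (fun x acc => match x with inl k => Nat.max k acc | inr _ => acc end) 0%nat L.
Definition maxl2 (L : list (nat + (nat * nat))) : nat :=
  fold_right (fun x acc => match x with inl _ => acc | inr p => Nat.max (fst p) acc end) 0%nat L.

Lemma maxl1_spec L k : In (inl k) L -> (k <= maxl1 L)%nat.
Proof. induction L; simpl; [contradiction|]. intros [->|H]; [lia|]. specialize (IHL H). destruct a; lia. Qed.
Lemma maxl2_spec L m i : In (inr (m, i)) L -> (m <= maxl2 L)%nat.
Proof. induction L; simpl; [contradiction|]. intros [->|H]; [simpl; lia|]. specialize (IHL H). destruct a; lia. Qed.


Lemma pz_dj d (j : nat) : powerRZ 2 (- (Z.of_nat d * Z.of_nat j)) = ((/2) ^ j) ^ d.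
Proof.
  rewrite <- Nat2Z.inj_mul, powerRZ_neg', <- pow_powerRZ, <- pow_inv, <- pow_mult.
  f_equal. lia.
Qed.

Theorem theorem8p5 (d : nat) (hd : (1 <= d)%nat) (N : pt d -> R)
  (hN : is_norm d N) (U : pt d -> Prop) (x : nat -> pt d)
  (hUo : is_open d U) (hUne : exists y, U y)
  (j0 : Z) (k : Fin.t d -> Z)
  (hsub : forall y, in_cube j0 k y -> U y)
  (hlim : forall eps, 0 < eps -> forall J : nat, exists j : nat, (J <= j)%nat /\
     exists c : nat, is_card (in_M x j0 k j) c /\
       powerRZ 2 (- (Z.of_nat d * Z.of_nat j)) * INR c < eps) :
  ~ uniformly_eutaxic d N x U.
Proof.
  intro Heut.
  destruct (norm_lower d N hN) as [c [Hc Hcn]].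
  set (S0 := powerRZ 2 (- j0)). assert (HS0 : 0 < S0) by apply powerRZ_pos.
  set (V := (S0 / 2) ^ d). assert (HV : 0 < V) by (apply pow_lt; lra).
  set (eps := fun m : nat => (/6) ^ d * (/2) ^ (m + 2)).
  assert (Heps : forall m, 0 < eps m) by (intro; apply Rmult_lt_0_compat; apply pow_lt; lra).
  assert (Hpick : forall m lo, exists p : nat * list (Fin.t d -> Z), (lo <= fst p)%nat /\
     (forall a, in_M x j0 k (fst p) a <-> In a (snd p)) /\
     powerRZ 2 (- (Z.of_nat d * Z.of_nat (fst p))) * INR (length (snd p)) < eps m).
  { intros m lo. destruct (hlim (eps m) (Heps m) lo) as [j [Hj [cc [[l [_ [Hl1 Hl2]]] Hcc]]]].
    exists (j, l). simpl. split; auto. split; auto. rewrite Hl1; auto. }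
  set (G := fun m lo => proj1_sig (constructive_indefinite_description _ (Hpick m lo))).
  assert (HG : forall m lo, (lo <= fst (G m lo))%nat /\
     (forall a, in_M x j0 k (fst (G m lo)) a <-> In a (snd (G m lo))) /\
     powerRZ 2 (- (Z.of_nat d * Z.of_nat (fst (G m lo)))) * INR (length (snd (G m lo))) < eps m).
  { intros m lo. exact (proj2_sig (constructive_indefinite_description _ (Hpick m lo))). }
  set (J00 := (Z.to_nat (Z.abs j0) + 3)%nat).
  set (J := fun m => nat_rect (fun _ => nat) (fst (G 0%nat J00)) (fun m Jm => fst (G (S m) (S Jm))) m).
  set (lo := fun m => match m with O => J00 | S m' => S (J m') end).
  assert (HJ : forall m, J m = fst (G m (lo m))) by (intro m; destruct m; reflexivity).
  set (Lst := fun m => snd (G m (lo m))).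
  assert (HJS : forall m, (S (J m) <= J (S m))%nat).
  { intro m. rewrite (HJ (S m)). apply (HG (S m) (lo (S m))). }
  assert (HJ0 : forall m, (J00 + m <= J m)%nat).
  { induction m. - rewrite HJ. pose proof (proj1 (HG 0%nat (lo 0%nat))). change (lo 0%nat) with J00 in *. lia.
    - specialize (HJS m). lia. }
  set (H := fun m => Z.to_nat (j0 + Z.of_nat (J m))).
  assert (HHz : forall m, Z.of_nat (H m) = (j0 + Z.of_nat (J m))%Z).
  { intro m. unfold H. specialize (HJ0 m). unfold J00 in HJ0. rewrite Z2Nat.id; [reflexivity|lia]. }
  assert (HH0 : forall m, (m + 3 <= H m)%nat).
  { intro m. specialize (HHz m). specialize (HJ0 m). unfold J00 in HJ0. lia. }
  assert (HHS : forall m, (S (H m) <= H (S m))%nat).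
  { intro m. pose proof (HHz m). pose proof (HHz (S m)). specialize (HJS m). lia. }
  set (r := rr d H c).
  pose proof (rr_Pd d hd H HH0 HHS c Hc) as HPd. fold r in HPd.
  destruct (Heut r HPd (V / 8) ltac:(lra)) as [a [b [Hab [Hcov Hsum]]]].
  set (w := fun m => powerRZ 2 (- (j0 + Z.of_nat (J m)))).
  assert (Hw_pos : forall m, 0 < w m) by (intro; apply powerRZ_pos).
  assert (Hw_H : forall m, w m = (/2) ^ (H m)).
  { intro m. unfold w. rewrite <- HHz, powerRZ_neg', <- pow_powerRZ, pow_inv. reflexivity. }
  assert (Hw_S : forall m, w m = S0 * (/2) ^ (J m)).
  { intro m. unfold w. rewrite powerRZ_gen, pow_inv. reflexivity. }
  assert (Hw_small : forall m, w m <= S0 / 8).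
  { intro m. rewrite Hw_S. assert ((/2) ^ (J m) <= (/2) ^ 3) by (apply inv2_pow_le; specialize (HJ0 m); unfold J00 in HJ0; lia).
    simpl in H0. nra. }
  assert (Hr : forall n, r n = c * w (mf d H n)) by (intro n; unfold r, rr; rewrite Hw_H; reflexivity).
  set (Ck := fun kk => 2 ^ d * fprod d (fun i => (b kk i - a kk i) + 1)).
  assert (HCk : forall kk, 0 <= Ck kk).
  { intro kk. unfold Ck. apply Rmult_le_pos; [apply pow_le; lra|]. apply fprod_nonneg. intro i.
    specialize (Hab kk i). lra. }
  set (tk := fun kk => Rmin (1/2) (V * (/2) ^ (kk + 3) / (2 * (Ck kk + 1)))).
  assert (Htk : forall kk, 0 < tk kk /\ tk kk <= 1/2 /\ 2 * tk kk * Ck kk <= V * (/2) ^ (kk + 3)).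
  { intro kk. assert (Hg : 0 < (/2) ^ (kk + 3)) by (apply pow_lt; lra). specialize (HCk kk).
    assert (0 < V * (/2) ^ (kk + 3) / (2 * (Ck kk + 1))) by (apply Rdiv_lt_0_compat; nra).
    split; [apply Rmin_glb_lt; lra|]. split; [apply Rmin_l|].
    assert (tk kk <= V * (/2) ^ (kk + 3) / (2 * (Ck kk + 1))) by apply Rmin_r.
    assert (2 * tk kk * (Ck kk + 1) <= V * (/2) ^ (kk + 3)).
    { apply (Rmult_le_compat_r (2 * (Ck kk + 1))) in H1; [|lra].
      replace (V * (/ 2) ^ (kk + 3) / (2 * (Ck kk + 1)) * (2 * (Ck kk + 1))) with (V * (/ 2) ^ (kk + 3)) in H1 by (field; lra).
      lra. }
    assert (0 < tk kk) by (apply Rmin_glb_lt; lra). nra. }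
  set (EB := fun kk => ((fun i => a kk i - tk kk) : pt d, (fun i => b kk i + tk kk) : pt d)).
  set (SB := fun m i => ((fun j => w m * IZR (nth i (Lst m) (fun _ => 0%Z) j) - w m) : pt d,
                         (fun j => w m * (IZR (nth i (Lst m) (fun _ => 0%Z) j) + 1) + w m) : pt d)).
  set (O := fun (ix : (nat + (nat * nat))%type) (y : pt d) => match ix with
            | inl kk => forall i, fst (EB kk) i < y i < snd (EB kk) i
            | inr (m, i) => (i < length (Lst m))%nat /\ forall j, fst (SB m i) j < y j < snd (SB m i) j end).
  set (q := fun i => S0 * IZR (k i) + S0 / 4).
  assert (Hcover : forall y, inbox q (fun i => q i + S0 / 2) y -> exists ix, O ix y).
  { intros y Hy.
    assert (Hlam : in_cube j0 k y).
    { intro i. change (powerRZ 2 (- j0)) with S0. specialize (Hy i). unfold q in Hy. lra. }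
    destruct (classic (forall m, exists n, (m <= n)%nat /\ (1 <= n)%nat /\ N (psub y (x n)) < r n)) as [Happ|Hnapp].
    - destruct (Happ 1%nat) as [n [_ [Hn1 HnN]]]. set (mm := mf d H n) in *.
      assert (Hclose : forall i, Rabs (y i - x n i) < w mm).
      { intro i. specialize (Hcn (psub y (x n)) i). unfold psub in Hcn at 1. rewrite Hr in HnN.
        fold mm in HnN. apply (Rmult_lt_reg_l c); auto. lra. }
      assert (Hxl : in_cube j0 k (x n)).
      { intro i. change (powerRZ 2 (- j0)) with S0. specialize (Hy i). specialize (Hclose i).
        specialize (Hw_small mm). unfold q in Hy. apply Rabs_def2 in Hclose. lra. }
      destruct (dyadic_sub d j0 k (J mm) (x n) Hxl) as [kp [Hkp Hnest]].
      assert (HinM : in_M x j0 k (J mm) kp).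
      { split; [exact Hnest|]. exists n. split; [exact Hn1|]. split; [|exact Hkp].
        rewrite <- HHz, <- Nat2Z.inj_mul, <- pow_powerRZ.
        destruct (mf_spec d hd H HH0 n) as [Hn _]. fold mm in Hn. unfold Pn in Hn.
        apply le_INR in Hn. rewrite pow_INR in Hn. exact Hn. }
      assert (HIn : In kp (Lst mm)).
      { unfold Lst. apply (proj1 (proj2 (HG mm (lo mm)))). rewrite <- HJ. exact HinM. }
      destruct (In_nth (Lst mm) kp (fun _ => 0%Z) HIn) as [i [Hi Hnth]].
      exists (inr (mm, i)). simpl. split; [exact Hi|]. intro j. rewrite Hnth.
      specialize (Hkp j). change (powerRZ 2 (- (j0 + Z.of_nat (J mm)))) with (w mm) in Hkp.
      specialize (Hclose j). apply Rabs_def2 in Hclose. lra.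
    - destruct (Hcov y (conj (hsub y Hlam) Hnapp)) as [kk Hkk].
      exists (inl kk). intro i. simpl. specialize (Hkk i). destruct (Htk kk) as [Ht _]. lra. }
  destruct (box_compact d q (fun i => q i + S0 / 2) _ O) as [L HL].
  { intros [kk|[m i]].
    - apply obox_open.
    - intros y [Hi Hy]. destruct (obox_open _ _ y Hy) as [e [He He']]. exists e; split; auto.
      intros z Hz; split; auto. }
  { exact Hcover. }
  set (K1 := S (maxl1 L)). set (Mx := S (maxl2 L)).
  set (BL := map EB (seq 0 K1) ++ flat_map (fun m => map (SB m) (seq 0 (length (Lst m)))) (seq 0 Mx)).
  assert (Hvol := cover_volume d q (S0 / 2) BL ltac:(lra)).
  assert (HV2 : (S0 / 2) ^ d <= lsum (map vol BL)).
  { apply Hvol.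
    - intros B HB i. apply in_app_or in HB. destruct HB as [HB|HB].
      + apply in_map_iff in HB. destruct HB as [kk [<- _]]. simpl. specialize (Hab kk i).
        destruct (Htk kk) as [Ht _]. lra.
      + apply in_flat_map in HB. destruct HB as [m [_ HB]]. apply in_map_iff in HB.
        destruct HB as [i0 [<- _]]. simpl. specialize (Hw_pos m). lra.
    - intros y Hy. destruct (HL y Hy) as [ix [Hix HO]]. destruct ix as [kk|[m i]].
      + exists (EB kk). split.
        * apply in_or_app; left. apply in_map. apply in_seq. pose proof (maxl1_spec L kk Hix). unfold K1; lia.
        * intro i. specialize (HO i). lra.
      + destruct HO as [Hi HO]. exists (SB m i). split.
        * apply in_or_app; right. apply in_flat_map. exists m. split.
          -- apply in_seq. pose proof (maxl2_spec L m i Hix). unfold Mx; lia.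
          -- apply in_map. apply in_seq. lia.
        * intro j. specialize (HO j). lra. }
  unfold BL in HV2. rewrite map_app, lsum_app, map_map, lsum_flat_map in HV2.
  assert (P1 : lsum (map (fun kk => vol (EB kk)) (seq 0 K1)) <= V / 8 + V / 4).
  { eapply Rle_trans.
    - apply (lsum_map_le _ (fun kk => fprod d (fun i => b kk i - a kk i) + V * (/2) ^ (kk + 3))).
      intros kk _. unfold vol. simpl.
      replace (fun i => b kk i + tk kk - (a kk i - tk kk)) with (fun i => (b kk i - a kk i) + 2 * tk kk)
        by (apply functional_extensionality; intro; ring).
      destruct (Htk kk) as [Ht1 [Ht2 Ht3]].
      eapply Rle_trans. { apply fprod_cont. intro i; specialize (Hab kk i); lra. lra. }
      cbv beta. unfold Ck in Ht3. lra.
    - rewrite lsum_map_plus. unfold K1. rewrite lsum_seq_sum.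
      specialize (Hsum (maxl1 L)).
      rewrite lsum_map_scal. pose proof (geo_bound 3 (S (maxl1 L))) as Hg.
      replace (2 * (/2) ^ 3) with (1/4) in Hg by (simpl; field).
      apply (Rmult_le_compat_l V) in Hg; lra. }
  assert (P2 : lsum (map (fun m => lsum (map vol (map (SB m) (seq 0 (length (Lst m)))))) (seq 0 Mx)) <= V / 2).
  { eapply Rle_trans.
    - apply (lsum_map_le _ (fun m => V * (/2) ^ (m + 2))). intros m _.
      rewrite map_map. rewrite (lsum_seq_const _ 0 _ ((3 * w m) ^ d)).
      2: { intros i _. unfold vol, SB. simpl. rewrite <- fprod_const. f_equal.
           apply functional_extensionality; intro; ring. }
      destruct (HG m (lo m)) as [_ [_ Hsm]]. rewrite <- HJ in Hsm. fold (Lst m) in Hsm.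
      rewrite pz_dj in Hsm. unfold eps in Hsm.
      rewrite Hw_S. unfold V.
      replace ((3 * (S0 * (/ 2) ^ J m)) ^ d) with (3 ^ d * S0 ^ d * ((/ 2) ^ J m) ^ d)
        by (rewrite !Rpow_mult_distr; ring).
      replace ((S0 / 2) ^ d) with (3 ^ d * S0 ^ d * (/ 6) ^ d)
        by (unfold Rdiv; rewrite <- !Rpow_mult_distr; f_equal; field).
      assert (0 < 3 ^ d * S0 ^ d) by (apply Rmult_lt_0_compat; apply pow_lt; lra).
      apply (Rmult_lt_compat_l (3 ^ d * S0 ^ d)) in Hsm; [|lra]. nra.
    - rewrite lsum_map_scal. pose proof (geo_bound 2 Mx) as Hg.
      replace (2 * (/2) ^ 2) with (1/2) in Hg by (simpl; field).
      apply (Rmult_le_compat_l V) in Hg; lra. }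
  change ((S0 / 2) ^ d) with V in HV2. lra.
Qed.
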